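(* Let $X$ be a class of posets. Then: (i) The following are equivalent: (i.a) $X\text{-}\mathrm{Down}(P)\subseteq\mathrm{Id}(P)$ for all posets $P$; (i.b) every member of $X$ is upward directed. (ii) Consider the conditions: (ii.a) for all $Q,Q'\in X$ there exists $R\in X$ admitting an isotone map to the product poset $Q\times Q'$ whose image is cofinal in $Q\times Q'$; (ii.b) for every lower semilattice $S$, $X\text{-}\mathrm{Down}(S)$ is a lower subsemilattice of $\mathrm{Down}(S)$ (i.e., closed under pairwise intersection); (ii.c) for every upper semilattice $S$, $X\text{-}\mathrm{Down}(S)$ is an upper subsemilattice of $\mathrm{Id}(S)$; (ii.d) for every lattice $L$, $X\text{-}\mathrm{Down}(L)$ is a sublattice of $\mathrm{Id}(L)$. Then (ii.a) implies (ii.b); and if the equivalent conditions of (i) hold, then (ii.a) implies both (ii.c) and (ii.d).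
   Context: For a poset $P$ and $Y\subseteq P$, $P\downarrow Y=\{y\in P\mid\exists x\in Y,\ y\le x\}$. A downset of $P$ is a subset $d$ with $x\le y\in d\Rightarrow x\in d$; $\mathrm{Down}(P)$ is the set of all downsets of $P$ ordered by inclusion (for $S$ a lower semilattice its meet is intersection). An ideal of $P$ is a (possibly empty) upward directed downset; $\mathrm{Id}(P)$ is the set of all ideals ordered by inclusion (for $S$ an upper semilattice, $\mathrm{Id}(S)$ is a lattice whose join is the ideal generated by the union; for $L$ a lattice its meet is intersection). For a class $X$ of posets, $X\text{-}\mathrm{Down}(P)\subseteq\mathrm{Down}(P)$ is the set of all downsets of the form $P\downarrow f(Q)$ with $Q\in X$ and $f:Q\to P$ an isotone map. A subset $Y$ of a poset $Z$ is cofinal if every element of $Z$ is majorized by some element of $Y$. *)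

(* Defs.v *)
Record poset := Poset {
  car :> Type;
  le : car -> car -> Prop;
  le_refl : forall x, le x x;
  le_antisym : forall x y, le x y -> le y x -> x = y;
  le_trans : forall x y z, le x y -> le y z -> le x z
}.
Arguments le {p} _ _.

Definition subset {T : Type} (A B : T -> Prop) := forall x, A x -> B x.

Definition isotone {P Q : poset} (f : P -> Q) :=
  forall x y : P, le x y -> le (f x) (f y).

Definition down_of {P : poset} (Y : P -> Prop) : P -> Prop :=
  fun y => exists x, Y x /\ le y x.

Definition image {A : Type} {B : Type} (f : A -> B) : B -> Prop :=
  fun y => exists x, f x = y.

Definition is_downset {P : poset} (d : P -> Prop) :=
  forall x y : P, le x y -> d y -> d x.

Definition up_directed_set {P : poset} (d : P -> Prop) :=
  forall x y, d x -> d y -> exists z, d z /\ le x z /\ le y z.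

Definition up_directed (Q : poset) :=
  forall x y : Q, exists z, le x z /\ le y z.

(* ideals: possibly empty, upward directed downsets *)
Definition is_ideal {P : poset} (d : P -> Prop) :=
  is_downset d /\ up_directed_set d.

(* X-Down(P): d = P ↓ f(Q) for some Q in X and isotone f : Q -> P
   (equality of subsets taken extensionally) *)
Definition XDown (X : poset -> Prop) (P : poset) (d : P -> Prop) :=
  exists (Q : poset) (f : Q -> P), X Q /\ isotone f /\
    forall y, d y <-> down_of (image f) y.

Definition prod_le (Q Q' : poset) (a b : Q * Q') :=
  le (fst a) (fst b) /\ le (snd a) (snd b).

Lemma prod_le_refl Q Q' : forall x, prod_le Q Q' x x.
Proof. intros [a b]; split; apply le_refl. Qed.

Lemma prod_le_antisym Q Q' : forall x y,
  prod_le Q Q' x y -> prod_le Q Q' y x -> x = y.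
Proof.
  intros [a b] [c d] [H1 H2] [H3 H4]; simpl in *.
  rewrite (le_antisym _ _ _ H1 H3), (le_antisym _ _ _ H2 H4); reflexivity.
Qed.

Lemma prod_le_trans Q Q' : forall x y z,
  prod_le Q Q' x y -> prod_le Q Q' y z -> prod_le Q Q' x z.
Proof.
  intros [a b] [c d] [e g] [H1 H2] [H3 H4]; split; simpl in *;
  eapply le_trans; eauto.
Qed.

Definition prod_poset (Q Q' : poset) : poset :=
  Poset (Q * Q') (prod_le Q Q') (prod_le_refl Q Q')
        (prod_le_antisym Q Q') (prod_le_trans Q Q').

Definition cofinal {Z : poset} (Y : Z -> Prop) :=
  forall z : Z, exists y, Y y /\ le z y.

Definition is_glb {P : poset} (x y m : P) :=
  le m x /\ le m y /\ forall z, le z x -> le z y -> le z m.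
Definition is_lub {P : poset} (x y j : P) :=
  le x j /\ le y j /\ forall z, le x z -> le y z -> le j z.

Definition lower_semilattice (P : poset) := forall x y : P, exists m, is_glb x y m.
Definition upper_semilattice (P : poset) := forall x y : P, exists j, is_lub x y j.
Definition lattice (P : poset) := lower_semilattice P /\ upper_semilattice P.

(* d is the join of d1, d2 in Id(P): the ideal generated by d1 ∪ d2 *)
Definition ideal_join {P : poset} (d1 d2 d : P -> Prop) :=
  is_ideal d /\ subset d1 d /\ subset d2 d /\
  forall e, is_ideal e -> subset d1 e -> subset d2 e -> subset d e.

Definition XDown_lower_subsemilattice_Down (X : poset -> Prop) (S : poset) :=
  (forall d, XDown X S d -> is_downset d) /\
  forall d1 d2, XDown X S d1 -> XDown X S d2 ->
    XDown X S (fun x => d1 x /\ d2 x).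

Definition XDown_upper_subsemilattice_Id (X : poset -> Prop) (S : poset) :=
  (forall d, XDown X S d -> is_ideal d) /\
  forall d1 d2, XDown X S d1 -> XDown X S d2 ->
    exists d, ideal_join d1 d2 d /\ XDown X S d.

(* X-Down(L) is a sublattice of Id(L) (meet in Id(L) is intersection) *)
Definition XDown_sublattice_Id (X : poset -> Prop) (L : poset) :=
  XDown_upper_subsemilattice_Id X L /\
  forall d1 d2, XDown X L d1 -> XDown X L d2 ->
    XDown X L (fun x => d1 x /\ d2 x).

(* Main.v *)
Require Import Defs.
From Stdlib Require Import ClassicalEpsilon Classical.

Lemma choose2 {S : poset} (R : S -> S -> S -> Prop) :
  (forall x y : S, exists m, R x y m) -> exists op : S -> S -> S, forall x y, R x y (op x y).
Proof.
  intros H.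
  exists (fun x y => proj1_sig (constructive_indefinite_description _ (H x y))).
  intros x y; exact (proj2_sig (constructive_indefinite_description _ (H x y))).
Qed.

Lemma dir_ideal (Q P : poset) (f : Q -> P) : up_directed Q -> isotone f ->
  is_ideal (down_of (image f)).
Proof.
  intros HQ Hf; split.
  - intros x y Hxy [z [Hz Hyz]]. exists z; split; auto. eapply le_trans; eauto.
  - intros x y [a [[qa <-] Ha]] [b [[qb <-] Hb]].
    destruct (HQ qa qb) as [q [H1 H2]].
    exists (f q); split.
    + exists (f q); split; [exists q; reflexivity | apply le_refl].
    + split; eapply le_trans; eauto.
Qed.

Lemma XDown_ideal X : (forall Q, X Q -> up_directed Q) ->
  forall (P : poset) (d : P -> Prop), XDown X P d -> is_ideal d.
Proof.
  intros HX P d [Q [f [HQ [Hf Hd]]]].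
  destruct (dir_ideal Q P f (HX Q HQ) Hf) as [H1 H2]; split.
  - intros x y Hxy Hy. apply Hd. apply Hd in Hy. eauto.
  - intros x y Hx Hy. apply Hd in Hx. apply Hd in Hy.
    destruct (H2 x y Hx Hy) as [z [Hz Hz']]. exists z; split; auto. apply Hd; auto.
Qed.

Lemma meet_closed (X : poset -> Prop) :
  (forall Q Q', X Q -> X Q' ->
        exists R, X R /\ exists f : R -> prod_poset Q Q',
          isotone f /\ cofinal (image f)) ->
  forall S, lower_semilattice S ->
  forall d1 d2, XDown X S d1 -> XDown X S d2 -> XDown X S (fun x => d1 x /\ d2 x).
Proof.
  intros Hiia S HS d1 d2 [Q [f [HQ [Hf Hd1]]]] [Q' [g [HQ' [Hg Hd2]]]].
  destruct (choose2 _ HS) as [op Hop].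
  destruct (Hiia Q Q' HQ HQ') as [R [HR [h [Hh Hc]]]].
  exists R, (fun r => op (f (fst (h r))) (g (snd (h r)))).
  split; [exact HR|split].
  - intros x y Hxy. destruct (Hh x y Hxy) as [H1 H2].
    destruct (Hop (f (fst (h x))) (g (snd (h x)))) as [A1 [A2 _]].
    destruct (Hop (f (fst (h y))) (g (snd (h y)))) as [_ [_ A3]].
    apply A3; [exact (le_trans _ _ _ _ A1 (Hf _ _ H1))|exact (le_trans _ _ _ _ A2 (Hg _ _ H2))].
  - intros y; split.
    + intros [Hy1 Hy2]. apply Hd1 in Hy1. apply Hd2 in Hy2.
      destruct Hy1 as [a [[q <-] Ha]]. destruct Hy2 as [b [[q' <-] Hb]].
      destruct (Hc (q, q')) as [z [[r <-] [H1 H2]]]. simpl in H1, H2.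
      exists (op (f (fst (h r))) (g (snd (h r)))); split; [exists r; reflexivity|].
      destruct (Hop (f (fst (h r))) (g (snd (h r)))) as [_ [_ A3]].
      apply A3; [exact (le_trans _ _ _ _ Ha (Hf _ _ H1))|exact (le_trans _ _ _ _ Hb (Hg _ _ H2))].
    + intros [z [[r <-] Hz]].
      destruct (Hop (f (fst (h r))) (g (snd (h r)))) as [A1 [A2 _]].
      split; [apply Hd1|apply Hd2].
      * exists (f (fst (h r))); split; [exists (fst (h r)); reflexivity|eapply le_trans; eauto].
      * exists (g (snd (h r))); split; [exists (snd (h r)); reflexivity|eapply le_trans; eauto].
Qed.

Lemma join_core (X : poset -> Prop) :
  (forall Q, X Q -> up_directed Q) ->
  (forall Q Q', X Q -> X Q' ->
        exists R, X R /\ exists f : R -> prod_poset Q Q',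
          isotone f /\ cofinal (image f)) ->
  forall S, upper_semilattice S ->
  forall (Q Q' : poset) (f : Q -> S) (g : Q' -> S), X Q -> X Q' -> isotone f -> isotone g ->
  forall q0 : Q, forall q0' : Q',
  forall d1 d2 : S -> Prop, (forall y, d1 y <-> down_of (image f) y) ->
    (forall y, d2 y <-> down_of (image g) y) ->
    exists d, ideal_join d1 d2 d /\ XDown X S d.
Proof.
  intros HX Hiia S HS Q Q' f g HQ HQ' Hf Hg q0 q0' d1 d2 Hd1 Hd2.
  destruct (choose2 _ HS) as [op Hop].
  destruct (Hiia Q Q' HQ HQ') as [R [HR [h [Hh Hc]]]].
  set (k := fun r => op (f (fst (h r))) (g (snd (h r)))).
  assert (Hk : isotone k).
  { intros x y Hxy. destruct (Hh x y Hxy) as [H1 H2]. unfold k.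
    destruct (Hop (f (fst (h x))) (g (snd (h x)))) as [_ [_ A3]].
    destruct (Hop (f (fst (h y))) (g (snd (h y)))) as [A1 [A2 _]].
    apply A3; [exact (le_trans _ _ _ _ (Hf _ _ H1) A1)|exact (le_trans _ _ _ _ (Hg _ _ H2) A2)]. }
  assert (HD : XDown X S (down_of (image k))).
  { exists R, k; split; [exact HR|split; [exact Hk|tauto]]. }
  exists (down_of (image k)); split; [|exact HD].
  split; [exact (XDown_ideal X HX S _ HD)|split; [|split]].
  - intros y Hy. apply Hd1 in Hy. destruct Hy as [a [[q <-] Ha]].
    destruct (Hc (q, q0')) as [z [[r <-] [H1 _]]]. simpl in H1.
    exists (k r); split; [exists r; reflexivity|].
    destruct (Hop (f (fst (h r))) (g (snd (h r)))) as [A1 _].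
    eapply le_trans; [exact Ha|]. eapply le_trans; [apply Hf; exact H1|exact A1].
  - intros y Hy. apply Hd2 in Hy. destruct Hy as [a [[q <-] Ha]].
    destruct (Hc (q0, q)) as [z [[r <-] [_ H1]]]. simpl in H1.
    exists (k r); split; [exists r; reflexivity|].
    destruct (Hop (f (fst (h r))) (g (snd (h r)))) as [_ [A1 _]].
    eapply le_trans; [exact Ha|]. eapply le_trans; [apply Hg; exact H1|exact A1].
  - intros e [He1 He2] S1 S2 y [z [[r <-] Hz]].
    apply (He1 _ _ Hz).
    assert (E1 : e (f (fst (h r)))).
    { apply S1, Hd1. exists (f (fst (h r))); split; [exists (fst (h r)); reflexivity|apply le_refl]. }
    assert (E2 : e (g (snd (h r)))).
    { apply S2, Hd2. exists (g (snd (h r))); split; [exists (snd (h r)); reflexivity|apply le_refl]. }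
    destruct (He2 _ _ E1 E2) as [w [Hw [W1 W2]]].
    destruct (Hop (f (fst (h r))) (g (snd (h r)))) as [_ [_ A3]].
    apply (He1 _ _ (A3 w W1 W2) Hw).
Qed.

Lemma join_closed (X : poset -> Prop) :
  (forall Q, X Q -> up_directed Q) ->
  (forall Q Q', X Q -> X Q' ->
        exists R, X R /\ exists f : R -> prod_poset Q Q',
          isotone f /\ cofinal (image f)) ->
  forall S, upper_semilattice S ->
  forall d1 d2, XDown X S d1 -> XDown X S d2 ->
    exists d, ideal_join d1 d2 d /\ XDown X S d.
Proof.
  intros HX Hiia S HS d1 d2 D1 D2.
  pose proof D1 as [Q [f [HQ [Hf Hd1]]]]. pose proof D2 as [Q' [g [HQ' [Hg Hd2]]]].
  destruct (classic (inhabited Q)) as [[q0]|NQ].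
  - destruct (classic (inhabited Q')) as [[q0']|NQ'].
    + eapply join_core; [exact HX|exact Hiia|exact HS|exact HQ|exact HQ'|exact Hf|exact Hg|exact q0|exact q0'|exact Hd1|exact Hd2].
    + exists d1; split; [|exact D1].
      split; [exact (XDown_ideal X HX S _ D1)|split; [intros y; auto|split]].
      * intros y Hy. apply Hd2 in Hy. destruct Hy as [a [[q _] _]]. exfalso; apply NQ'; constructor; exact q.
      * intros e _ S1 _. exact S1.
  - exists d2; split; [|exact D2].
    split; [exact (XDown_ideal X HX S _ D2)|split; [|split; [intros y; auto|]]].
    * intros y Hy. apply Hd1 in Hy. destruct Hy as [a [[q _] _]]. exfalso; apply NQ; constructor; exact q.
    * intros e _ _ S2. exact S2.
Qed.

Theorem lemma5p1 (X : poset -> Prop) :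
  (* (i) *)
  ((forall (P : poset) (d : P -> Prop), XDown X P d -> is_ideal d) <->
   (forall Q, X Q -> up_directed Q)) /\
  (* (ii) *)
  (let iia := forall Q Q', X Q -> X Q' ->
        exists R, X R /\ exists f : R -> prod_poset Q Q',
          isotone f /\ cofinal (image f) in
   (iia -> forall S, lower_semilattice S -> XDown_lower_subsemilattice_Down X S) /\
   ((forall Q, X Q -> up_directed Q) -> iia ->
      (forall S, upper_semilattice S -> XDown_upper_subsemilattice_Id X S) /\
      (forall L, lattice L -> XDown_sublattice_Id X L))).
Proof.
  split.
  - split.
    + intros H Q HQ x y.
      assert (Hd : XDown X Q (fun _ => True)).
      { exists Q, (fun q => q); split; [exact HQ|split; [intros a b h; exact h|]].
        intros y0; split; [intros _; exists y0; split; [exists y0; reflexivity|apply le_refl]|auto]. }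
      destruct (proj2 (H Q _ Hd) x y I I) as [z [_ Hz]]. exists z; exact Hz.
    + apply XDown_ideal.
  - intros iia. split.
    + intros Hiia S HS. split.
      * intros d [Q [f [HQ [Hf Hd]]]] x y Hxy Hy. apply Hd. apply Hd in Hy.
        destruct Hy as [z [Hz Hyz]]. exists z; split; auto. eapply le_trans; eauto.
      * apply meet_closed; auto.
    + intros HX Hiia. split.
      * intros S HS. split; [apply XDown_ideal; auto|]. apply join_closed; auto.
      * intros L [HL1 HL2]. split.
        -- split; [apply XDown_ideal; auto|]. apply join_closed; auto.
        -- apply meet_closed; auto.
Qed.
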